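(* Let $X$ be a topological space, $\Delta$ a partition of $X$, $Y=X/\Delta$ with the quotient topology, $p:X\to Y$ the quotient map, $\omega\in\Delta$ and $y=p(\omega)$. Then $H(\omega)\subset H_S(\omega)\subset p^{-1}(H(y))$. If $p$ is an open map, then $H(\omega)=H_S(\omega)=p^{-1}(H(y))$ and $p(H_S(\omega))=H(y)$.
   Context: For $y\in Y$, $H(y)=\bigcap_V\overline{V}$ over all neighborhoods $V$ of $y$. For $U\subset X$, $S(U)=p^{-1}(p(U))$ is its saturation. For $\omega\in\Delta$: $H(\omega)=\bigcap_{N}\overline{S(N)}$ where $N$ runs over all open neighborhoods of $\omega$ in $X$, and $H_S(\omega)=\bigcap_{N_S}\overline{N_S}$ where $N_S$ runs over all saturated open neighborhoods of $\omega$. *)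

(* Defs.v *)
From mathcomp Require Import all_boot all_algebra.
From mathcomp Require Import all_classical all_reals all_analysis.
Set Implicit Arguments. Unset Strict Implicit. Unset Printing Implicit Defensive.
Local Open Scope classical_set_scope.

Definition is_partition (X : Type) (Delta : set (set X)) : Prop :=
  (forall B, Delta B -> B !=set0) /\
  (forall B C, Delta B -> Delta C -> B `&` C !=set0 -> B = C) /\
  (forall x, exists2 B, Delta B & B x).

Definition is_quotient_by (X Y : topologicalType) (Delta : set (set X)) (p : X -> Y) : Prop :=
  (forall y : Y, exists x, p x = y) /\
  (forall x x' : X, p x = p x' <-> exists2 B, Delta B & (B x /\ B x')) /\
  (forall V : set Y, open V <-> open (p @^-1` V)).

Definition open_map (X Y : topologicalType) (p : X -> Y) : Prop :=
  forall U : set X, open U -> open (p @` U).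

Definition sat (X Y : Type) (p : X -> Y) (U : set X) : set X := p @^-1` (p @` U).

Definition Hpt (Y : topologicalType) (y : Y) : set Y :=
  [set z | forall V, nbhs y V -> closure V z].

Definition Hblk (X Y : topologicalType) (p : X -> Y) (w : set X) : set X :=
  [set x | forall N : set X, open N -> w `<=` N -> closure (sat p N) x].

Definition HS (X Y : topologicalType) (p : X -> Y) (w : set X) : set X :=
  [set x | forall N : set X, open N -> w `<=` N -> sat p N = N -> closure N x].

(* Main.v *)
Require Import Defs.
From mathcomp Require Import all_boot all_algebra.
From mathcomp Require Import all_classical all_reals all_analysis.
Local Open Scope classical_set_scope.

Lemma closure_open (T : topologicalType) (A : set T) (x : T) :
  closure A x <-> (forall U, open U -> U x -> A `&` U !=set0).
Proof.
split.
- move=> cA U oU Ux; apply: cA; exact: open_nbhs_nbhs.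
- move=> H B; rewrite nbhsE => -[U [oU Ux] UB].
  have [z [Az Uz]] := H U oU Ux; exists z; split => //; exact: UB.
Qed.

Lemma nbhs_open (T : topologicalType) (V : set T) (x : T) :
  nbhs x V -> exists2 U, open U /\ U x & U `<=` V.
Proof. by rewrite nbhsE => -[U [oU Ux] UV]; exists U. Qed.

Theorem lemma3p5 (X Y : topologicalType) (Delta : set (set X)) (p : X -> Y)
  (w : set X) (y : Y) :
  is_partition Delta -> is_quotient_by Delta p ->
  Delta w -> p @` w = [set y] ->
  (Hblk p w `<=` HS p w /\ HS p w `<=` p @^-1` Hpt y) /\
  (open_map p ->
     Hblk p w = HS p w /\ HS p w = p @^-1` Hpt y /\ p @` HS p w = Hpt y).
Proof.
move=> _ [psurj [_ popen]] _ pw.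
have wy : forall z, w z -> p z = y.
  by move=> z wz; have : [set y] (p z) by rewrite -pw; exists z.
have h1 : Hblk p w `<=` HS p w.
  by move=> x Hx N oN wN sN; rewrite -sN; exact: Hx.
have h2 : HS p w `<=` p @^-1` Hpt y.
  move=> x Hx V /nbhs_open [V' [oV' V'y] V'V].
  have cN : closure (p @^-1` V') x.
    apply: Hx; first by rewrite -popen.
    - by move=> z wz /=; rewrite wy.
    - rewrite /sat; apply/seteqP; split => z /=.
      + by move=> [u /= Vu <-].
      + by move=> Vz; exists z.
  apply/closure_open => U oU Ux.
  have /closure_open := cN.
  move=> /(_ (p @^-1` U)) []; first by rewrite -popen.
  - done.
  - move=> z [/= Vz Uz]; exists (p z); split => //; exact: V'V.
split => // omap.
have h3 : p @^-1` Hpt y `<=` Hblk p w.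
  move=> x /= Hx N oN wN.
  have [u wu] : w !=set0.
    have : [set y] y by [].
    by rewrite -pw => -[u wu _]; exists u.
  have cpN : closure (p @` N) (p x).
    apply: Hx; apply: open_nbhs_nbhs; split; first exact: omap.
    by exists u; [exact: wN | exact: wy].
  apply/closure_open => U oU Ux.
  move/closure_open: cpN => /(_ (p @` U) (omap _ oU)).
  case; first by exists x.
  move=> _ [[n Nn <-] [v Uv pv]].
  exists v; split => //; exists n => //.
have e1 : HS p w = p @^-1` Hpt y.
  apply/seteqP; split; [exact: h2 | move=> x Hx; exact: h1 (h3 _ Hx)].
have e0 : Hblk p w = HS p w.
  apply/seteqP; split; [exact: h1 | rewrite e1; exact: h3].
split => //; split => //.
rewrite e1; apply/seteqP; split => z.
- by move=> [x Hx <-].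
- by move=> Hz; have [x px] := psurj z; exists x => //=; rewrite px.
Qed.
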